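(* Let $M\le N$, $K=N-M$. Let $A$ be a commutative unital $C^*$-algebra and $P\in M_M(A)$ a submagic matrix whose entries generate $A$, and write $A=C(S)$ with $S\subset\widetilde S_M$ so that $P_{ij}$ is the function $\sigma\mapsto1$ if $\sigma(j)=i$ and $0$ otherwise. The following are equivalent: (1) $P$ can be completed to a magic matrix $\widetilde P\in M_N(A)$ (one whose upper-left $M\times M$ block is $P$); (2) each $\sigma\in S$ has at most $K$ undefined values (i.e. if $\sigma:X\to Y$ then $M-|X|\le K$); (3) $\sum_{i,j}P_{ij}\ge (M-K)1$.
   Context: $\widetilde S_M$ is the set of partial permutations of $\{1,\ldots,M\}$, i.e. bijections $\sigma:X\to Y$ with $X,Y\subset\{1,\ldots,M\}$; $\sigma(j)$ is undefined for $j\notin X$. A submagic matrix over $A$ is a square matrix of orthogonal projections, pairwise orthogonal within each row and each column; it is magic if moreover each row and each column sums to $1$. Every commutative unital $C^*$-algebra generated by the entries of an $M\times M$ submagic matrix is of the form $C(S)$ as described, for some $S\subset\widetilde S_M$. *)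

(* Defs.v *)
From HB Require Import structures.
From mathcomp Require Import all_boot all_order all_algebra.
From mathcomp Require Import complex.
From mathcomp Require Import reals.
Set Implicit Arguments. Unset Strict Implicit. Unset Printing Implicit Defensive.
Import Order.TTheory GRing.Theory Num.Theory.
Local Open Scope ring_scope.

(* Partial permutations of {1..M} (encoded as 'I_M): a finite function
   j |-> Some i (sigma(j) = i) or None (sigma(j) undefined), injective on
   its domain. *)
Definition pperm_axiom M (f : {ffun 'I_M -> option 'I_M}) : bool :=
  [forall j, forall k, (f j != None) ==> (f j == f k) ==> (j == k)].

Definition pperm M := {f : {ffun 'I_M -> option 'I_M} | pperm_axiom f}.

Definition pp_app M (s : pperm M) (j : 'I_M) : option 'I_M := val s j.

Definition pp_dom M (s : pperm M) : {set 'I_M} := [set j | pp_app s j != None].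

Definition pts M (S : {set pperm M}) := {s : pperm M | s \in S}.

(* C(S): complex-valued functions on the finite (discrete) space S;
   all algebra operations are pointwise. *)
Definition CS (R : realType) M (S : {set pperm M}) := pts S -> R[i].

Definition is_proj (R : realType) M (S : {set pperm M}) (p : CS R S) : Prop :=
  forall s, p s * p s = p s /\ (p s)^* = p s.

Definition magic (R : realType) M (S : {set pperm M}) N
    (Q : 'I_N -> 'I_N -> CS R S) : Prop :=
  [/\ forall i j, is_proj (Q i j),
      forall i j k s, j != k -> Q i j s * Q i k s = 0,
      forall i j k s, i != k -> Q i j s * Q k j s = 0,
      forall i s, \sum_(j < N) Q i j s = 1
    & forall j s, \sum_(i < N) Q i j s = 1].

Definition Pmat (R : realType) M (S : {set pperm M}) (i j : 'I_M) : CS R S :=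
  fun s => if pp_app (val s) j == Some i then 1 else 0.

(* Main.v *)
Require Import Defs.
From HB Require Import structures.
From mathcomp Require Import all_boot all_order all_algebra.
From mathcomp Require Import complex.
From mathcomp Require Import reals.
From mathcomp Require Import fingroup perm.
From Stdlib Require Import FunctionalExtensionality.
Import Order.TTheory GRing.Theory Num.Theory.
Local Open Scope ring_scope.

Lemma perm_ext (T : finType) (A : {set T}) (f : T -> T) :
  {in A &, injective f} -> exists p : {perm T}, forall x, x \in A -> p x = f x.
Proof.
move=> finj.
pose eA := enum (~: A). pose eB := enum (~: (f @: A)).
have szE : size eA = size eB.
  rewrite /eA /eB -!cardE.
  have h1 := cardsC A; have h2 := cardsC (f @: A).
  rewrite card_in_imset // in h2. apply/eqP; rewrite -(eqn_add2l #|A|) h1 h2 //.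
pose g x := if x \in A then f x else nth x eB (index x eA).
have ginj : injective g.
  have hB x : x \notin A -> nth x eB (index x eA) \in ~: (f @: A).
    move=> xA; rewrite -(mem_enum (pred_of_set (~: (f @: A)))) -/eB mem_nth //.
    by rewrite -szE index_mem /eA mem_enum inE.
  move=> x y; rewrite /g.
  case: (boolP (x \in A)) => xA; case: (boolP (y \in A)) => yA.
  - exact: finj.
  - move=> e; have := hB _ yA; rewrite -e inE => /negP; case.
    by apply/imsetP; exists x.
  - move=> e; have := hB _ xA; rewrite e inE => /negP; case.
    by apply/imsetP; exists y.
  - have ix : (index x eA < size eB)%N by rewrite -szE index_mem /eA mem_enum inE.
    have iy : (index y eA < size eB)%N by rewrite -szE index_mem /eA mem_enum inE.
    rewrite (set_nth_default x _ iy) => /eqP; rewrite nth_uniq ?enum_uniq // => /eqP e.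
    have xe : x \in eA by rewrite /eA mem_enum inE.
    have ye : y \in eA by rewrite /eA mem_enum inE.
    by rewrite -(nth_index x xe) e (set_nth_default y) ?nth_index // index_mem.
exists (perm ginj) => x xA; by rewrite permE /g xA.
Qed.

Lemma ext_pperm (M N : nat) (hMN : (M <= N)%N) (s : pperm M)
  (hs : (M - #|pp_dom s| <= N - M)%N) :
  exists p : {perm 'I_N},
    (forall j i, pp_app s j = Some i -> p (widen_ord hMN j) = widen_ord hMN i) /\
    (forall j, pp_app s j = None -> (M <= p (widen_ord hMN j))%N).
Proof.
pose U := [set j : 'I_M | pp_app s j == None]; pose eU := enum U.
have cU : #|U| = (M - #|pp_dom s|)%N.
  have e := cardsC (pp_dom s); rewrite card_ord in e.
  have eU' : ~: pp_dom s = U by apply/setP => j; rewrite !inE negbK.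
  have le : (#|pp_dom s| <= M)%N by rewrite (leq_trans (max_card _)) ?card_ord.
  by apply/eqP; rewrite eq_sym -(eqn_add2l #|pp_dom s|) subnKC // -eU' e.
have bnd j : j \in U -> (M + index j eU < N)%N.
  move=> jU; have : (index j eU < #|U|)%N by rewrite cardE index_mem mem_enum.
  rewrite cU => lt; rewrite -ltn_subRL; exact: leq_trans lt hs.
pose h (j : 'I_M) : 'I_N := match pp_app s j with
  | Some i => widen_ord hMN i
  | None => insubd (widen_ord hMN j) (M + index j eU)%N end.
pose f (x : 'I_N) : 'I_N := match (insub (val x) : option 'I_M) with
  | Some j => h j | None => x end.
have fW (j : 'I_M) : f (widen_ord hMN j) = h j.
  by rewrite /f /= valK.
have hinj : injective h.
  move=> j k; rewrite /h.
  case ej: (pp_app s j) => [i1|]; case ek: (pp_app s k) => [i2|].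
  - move=> /(congr1 val) /= /val_inj ei.
    have := valP s; move/forallP => /(_ j) /forallP /(_ k).
    rewrite /pp_app in ej ek; rewrite ej ek ei //= eqxx /=.
    by move=> /eqP.
  - move=> /(congr1 val); rewrite /= val_insubd (bnd k) ?inE ?ek // => e'.
    by have := ltn_ord i1; rewrite e' ltnNge leq_addr.
  - move=> /(congr1 val); rewrite /= val_insubd (bnd j) ?inE ?ej // => e'.
    by have := ltn_ord i2; rewrite -e' ltnNge leq_addr.
  - move=> /(congr1 val); rewrite /= !val_insubd !bnd ?inE ?ej ?ek //.
    move=> /eqP; rewrite eqn_add2l => /eqP ei.
    have jU : j \in eU by rewrite mem_enum inE ej.
    by rewrite -(nth_index j jU) ei nth_index // mem_enum inE ek.
pose W := [set x : 'I_N | (x < M)%N].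
have finj : {in W &, injective f}.
  move=> x y; rewrite !inE => xl yl.
  have -> : x = widen_ord hMN (Ordinal xl) by apply: val_inj.
  have -> : y = widen_ord hMN (Ordinal yl) by apply: val_inj.
  by rewrite !fW => /hinj ->.
have [p hp] := @perm_ext _ W f finj.
have pW j : p (widen_ord hMN j) = h j by rewrite hp ?fW // inE /= ltn_ord.
exists p; split.
  by move=> j i e; rewrite pW /h e.
move=> j e; rewrite pW /h e val_insubd bnd ?inE ?e //; exact: leq_addr.
Qed.

Lemma sumP (R : realType) M (S : {set pperm M}) (s : pts S) :
  \sum_(i < M) \sum_(j < M) @Pmat R M S i j s = (#|pp_dom (val s)|)%:R.
Proof.
rewrite exchange_big /=.
rewrite (eq_bigr (fun j => if j \in pp_dom (val s) then 1 else 0)).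
  by rewrite -big_mkcond sumr_const.
move=> j _; rewrite /Pmat inE.
case e: (pp_app (val s) j) => [i0|] /=.
  rewrite (bigD1 i0) //= eqxx big1 ?addr0 // => i ne.
  by case: eqP => // -[] h; rewrite h eqxx in ne.
by rewrite big1.
Qed.

Lemma eq23 (R : realType) (M N : nat) (d : nat) :
  ((M%:R - (N - M)%N%:R : R[i]) <= d%:R) = (M - d <= N - M)%N.
Proof. by rewrite lerBlDr -natrD ler_nat leq_subLR addnC. Qed.

Theorem proposition3p4 (R : realType) (M N : nat) (hMN : (M <= N)%N)
    (S : {set pperm M}) :
  let K := (N - M)%N in
  let P := @Pmat R M S in
  [/\ (exists Q : 'I_N -> 'I_N -> CS R S,
          magic Q /\
          forall i j : 'I_M, Q (widen_ord hMN i) (widen_ord hMN j) = P i j)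
      <-> (forall s, s \in S -> (M - #|pp_dom s| <= K)%N),
      (forall s, s \in S -> (M - #|pp_dom s| <= K)%N)
      <-> (forall s : pts S,
             (M%:R - K%:R : R[i]) <= \sum_(i < M) \sum_(j < M) P i j s)
    & (exists Q : 'I_N -> 'I_N -> CS R S,
          magic Q /\
          forall i j : 'I_M, Q (widen_ord hMN i) (widen_ord hMN j) = P i j)
      <-> (forall s : pts S,
             (M%:R - K%:R : R[i]) <= \sum_(i < M) \sum_(j < M) P i j s)].
Proof.
move=> K P.
have E23 : (forall s, s \in S -> (M - #|pp_dom s| <= K)%N)
      <-> (forall s : pts S,
             (M%:R - K%:R : R[i]) <= \sum_(i < M) \sum_(j < M) P i j s).
  split.
    by move=> H s; rewrite /P sumP eq23; apply: H; exact: valP.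
  move=> H s hs; have := H (exist _ s hs); by rewrite /P sumP eq23.
have E12 : (exists Q : 'I_N -> 'I_N -> CS R S,
          magic Q /\
          forall i j : 'I_M, Q (widen_ord hMN i) (widen_ord hMN j) = P i j)
      <-> (forall s, s \in S -> (M - #|pp_dom s| <= K)%N).
  split.
    move=> [Q [[hpr _ _ hrow hcol] hblk]] s hs.
    pose ss : pts S := exist _ s hs.
    have q0 i j : 0 <= Q i j ss.
      have [e1 e2] := hpr i j ss.
      by rewrite -e1 -{2}e2 -normCK exprn_ge0 // normr_ge0.
    pose W := [set x : 'I_N | (x < M)%N].
    have hW : W = widen_ord hMN @: [set: 'I_M].
      apply/setP => x; rewrite inE; apply/idP/imsetP.
        by move=> xl; exists (Ordinal xl) => //; apply: val_inj.
      by case=> y _ ->; rewrite /= ltn_ord.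
    have winj : {in [set: 'I_M] &, injective (widen_ord hMN)}.
      by move=> x y _ _ h; apply: val_inj; exact: (congr1 val h).
    have cW : #|~: W| = (N - M)%N.
      have e := cardsC W; rewrite card_ord in e.
      have cw : #|W| = M by rewrite hW card_in_imset // cardsT card_ord.
      by apply/eqP; rewrite -(eqn_add2l M) subnKC // -{1}cw e.
    pose U := [set j : 'I_M | pp_app s j == None].
    have cU : #|U| = (M - #|pp_dom s|)%N.
      have e := cardsC (pp_dom s); rewrite card_ord in e.
      have eU' : ~: pp_dom s = U by apply/setP => j; rewrite !inE negbK.
      have le : (#|pp_dom s| <= M)%N by rewrite (leq_trans (max_card _)) ?card_ord.
      by apply/eqP; rewrite eq_sym -(eqn_add2l #|pp_dom s|) subnKC // -eU' e.
    rewrite -cU /K -cW -(ler_nat R[i]).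
    pose F j := \sum_(i in ~: W) Q i j ss.
    have F0 j : 0 <= F j by apply: sumr_ge0.
    have step1 : #|U|%:R = \sum_(j in U) F (widen_ord hMN j) :> R[i].
      rewrite -sumr_const; apply: eq_bigr => j; rewrite inE => /eqP ej.
      have := hcol (widen_ord hMN j) ss.
      rewrite (bigID (mem W)) /=.
      have -> : \sum_(i < N | i \in W) Q i (widen_ord hMN j) ss = 0.
        rewrite hW big_imset //= big1 // => i _.
        by rewrite hblk /P /Pmat /pp_app /= -/(pp_app s j) ej.
      rewrite add0r => <-; rewrite /F; apply: eq_bigl => i; by rewrite !inE.
    rewrite step1.
    apply: (@le_trans _ _ (\sum_(j < N) F j)).
      rewrite [X in _ <= X](bigID (mem W)) /= hW big_imset //=.
      apply: ler_wpDr; first by apply: sumr_ge0.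
      rewrite [X in _ <= X](bigID (mem U)) /=.
      apply: ler_wpDr; first by apply: sumr_ge0.
      by rewrite le_eqVlt; apply/orP; left; apply/eqP; apply: eq_bigl => j; rewrite !inE.
    rewrite /F exchange_big /= -sumr_const le_eqVlt; apply/orP; left; apply/eqP.
    by apply: eq_bigr => i _; rewrite hrow.
  move=> H.
  have ex : forall s : pts S, exists p : {perm 'I_N},
    (forall j i, pp_app (val s) j = Some i -> p (widen_ord hMN j) = widen_ord hMN i) /\
    (forall j, pp_app (val s) j = None -> (M <= p (widen_ord hMN j))%N).
    move=> s; apply: ext_pperm; apply: H; exact: valP.
  have [p hp] := fin_all_exists ex.
  exists (fun i j s => if p s j == i then 1 else 0); split.
    split.
    - by move=> i j s; case: ifP => _; rewrite ?mulr1 ?mul0r ?conjC1 ?conjC0.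
    - move=> i j k s ne; case: eqP => e1; case: eqP => e2; rewrite ?mulr0 ?mul0r //.
      by move: ne; rewrite -(inj_eq (@perm_inj _ (p s))) e1 e2 eqxx.
    - move=> i j k s ne; case: eqP => e1; case: eqP => e2; rewrite ?mulr0 ?mul0r //.
      by move: ne; rewrite -e1 -e2 eqxx.
    - move=> i s; rewrite (bigD1 ((p s)^-1 i)%g) //= permKV eqxx big1 ?addr0 //.
      move=> j ne; case: eqP => // e; move: ne; by rewrite -e permK eqxx.
    - move=> j s; rewrite (bigD1 (p s j)) //= eqxx big1 ?addr0 //.
      by move=> i ne; case: eqP => // e; move: ne; rewrite e eqxx.
  move=> i j; apply: functional_extensionality => s; rewrite /P /Pmat.
  have [h1 h2] := hp s.
  case e: (pp_app (val s) j) => [i0|].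
    rewrite (h1 _ _ e).
    have -> : (widen_ord hMN i0 == widen_ord hMN i) = (i0 == i).
      apply/eqP/eqP => [h|->] //; apply: val_inj; exact: (congr1 val h).
    have -> : (Some i0 == Some i) = (i0 == i) by [].
    by [].
  have := h2 _ e; case: eqP => // ->; by rewrite /= leqNgt ltn_ord.
split => //.
split => [/E12/E23 // | /E23/E12 //].
Qed.
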